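(* Let $a_c\in(\pi,\frac32\pi)$ be the smallest strictly positive solution of $\tan(x)=\tanh(x)$. For $a>0$ the inequality $$\cosh(a)\sin(a)\sinh(x)\cos(x)-\sinh(a)\cos(a)\cosh(x)\sin(x)>0$$ holds for all $x\in(0,a)$ if and only if $a\in(0,a_c]$. *)

(* Defs.v *)
From Stdlib Require Import Reals.
Open Scope R_scope.

Definition tanhR (x : R) : R := sinh x / cosh x.

Definition is_smallest_pos_sol_tan_tanh (ac : R) : Prop :=
  0 < ac /\ tan ac = tanhR ac /\
  (forall x, 0 < x -> tan x = tanhR x -> ac <= x).

Definition ineqC6 (a x : R) : R :=
  cosh a * sin a * sinh x * cos x - sinh a * cos a * cosh x * sin x.

(* Main.v *)
Require Import Defs.
From Stdlib Require Import Reals Lra FunctionalExtensionality.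
Open Scope R_scope.

Definition psi x := sinh x * cos x.
Definition chi x := cosh x * sin x.
Definition psi' x := cosh x * cos x - sinh x * sin x.
Definition chi' x := sinh x * sin x + cosh x * cos x.
Definition Dd x := chi x - psi x.
Definition WW x := psi x * chi' x - chi x * psi' x.

Lemma dpsi x : derivable_pt_lim psi x (psi' x).
Proof.
  unfold psi'. replace (cosh x * cos x - sinh x * sin x) with
    (cosh x * cos x + sinh x * (- sin x)) by ring.
  apply (derivable_pt_lim_mult sinh cos); [apply derivable_pt_lim_sinh | apply derivable_pt_lim_cos].
Qed.

Lemma dchi x : derivable_pt_lim chi x (chi' x).
Proof.
  unfold chi'. 
  apply (derivable_pt_lim_mult cosh sin); [apply derivable_pt_lim_cosh | apply derivable_pt_lim_sin].
Qed.

Lemma dD x : derivable_pt_lim Dd x (chi' x - psi' x).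
Proof. apply (derivable_pt_lim_minus chi psi); [apply dchi|apply dpsi]. Qed.

Lemma ineq_eq a x : ineqC6 a x = chi a * psi x - psi a * chi x.
Proof. unfold ineqC6, chi, psi; ring. Qed.

Lemma dg a x : derivable_pt_lim (ineqC6 a) x (chi a * psi' x - psi a * chi' x).
Proof.
  assert (E : ineqC6 a = (fct_cte (chi a) * psi - fct_cte (psi a) * chi)%F).
  { apply functional_extensionality; intro t. rewrite ineq_eq. reflexivity. }
  rewrite E.
  replace (chi a * psi' x - psi a * chi' x) with
    ((0 * psi x + chi a * psi' x) - (0 * chi x + psi a * chi' x)) by ring.
  apply derivable_pt_lim_minus.
  - apply (derivable_pt_lim_mult (fct_cte (chi a)) psi); [apply derivable_pt_lim_const|apply dpsi].
  - apply (derivable_pt_lim_mult (fct_cte (psi a)) chi); [apply derivable_pt_lim_const|apply dchi].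
Qed.

Lemma cosh_pos x : 0 < cosh x.
Proof. unfold cosh. pose proof (exp_pos x); pose proof (exp_pos (-x)); lra. Qed.

Lemma sinh_pos x : 0 < x -> 0 < sinh x.
Proof. intro H. rewrite <- sinh_0. apply sinh_lt; lra. Qed.

Lemma cosh_sinh x : cosh x ^ 2 - sinh x ^ 2 = 1.
Proof.
  unfold cosh, sinh.
  replace (((exp x + exp (- x)) / 2) ^ 2 - ((exp x - exp (- x)) / 2) ^ 2)
    with (exp x * exp (-x)) by field.
  rewrite <- exp_plus. replace (x + - x) with 0 by ring. apply exp_0.
Qed.

Lemma sc x : sin x ^ 2 + cos x ^ 2 = 1.
Proof. pose proof (sin2_cos2 x). unfold Rsqr in H. lra. Qed.

Lemma WW_eq x : WW x = sinh x * cosh x - sin x * cos x.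
Proof.
  unfold WW, psi, chi, psi', chi'.
  transitivity (sinh x * cosh x * (sin x ^ 2 + cos x ^ 2) - sin x * cos x * (cosh x ^ 2 - sinh x ^ 2)).
  ring. rewrite sc, cosh_sinh. ring.
Qed.

Lemma WW_pos x : 0 < x -> 0 < WW x.
Proof.
  intro Hx. rewrite WW_eq.
  set (f := fun t => sinh t * cosh t - sin t * cos t).
  change (0 < f x).
  destruct (MVT_cor2 f (fun t => (cosh t * cosh t + sinh t * sinh t) - (cos t * cos t + sin t * (- sin t))) 0 x Hx)
    as [c [Hc1 Hc2]].
  { intros c _. unfold f. apply (derivable_pt_lim_minus (sinh * cosh)%F (sin * cos)%F);
    apply derivable_pt_lim_mult; first [apply derivable_pt_lim_sinh | apply derivable_pt_lim_cosh
      | apply derivable_pt_lim_sin | apply derivable_pt_lim_cos]. }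
  assert (f 0 = 0) by (unfold f; rewrite sinh_0, sin_0; ring).
  pose proof (sinh_pos c (proj1 Hc2)). pose proof (cosh_sinh c). pose proof (sc c).
  assert (Hd : 0 < (cosh c * cosh c + sinh c * sinh c) - (cos c * cos c + sin c * (- sin c))).
  { assert (0 < sinh c * sinh c) by (apply Rmult_lt_0_compat; lra).
    assert (0 <= sin c * sin c) by (apply Rle_0_sqr). simpl in *. lra. }
  pose proof (Rmult_lt_0_compat _ _ Hd Hx). lra.
Qed.

Lemma Dd0 : Dd 0 = 0.
Proof. unfold Dd, chi, psi. rewrite sinh_0, sin_0; ring. Qed.

Lemma Dpos_small x : 0 < x <= PI -> 0 < Dd x.
Proof.
  intros [H1 H2].
  destruct (MVT_cor2 Dd (fun t => chi' t - psi' t) 0 x H1) as [c [Hc1 Hc2]].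
  { intros c _. apply dD. }
  rewrite Dd0 in Hc1.
  assert (chi' c - psi' c = 2 * (sinh c * sin c)) by (unfold chi', psi'; ring).
  pose proof (sinh_pos c (proj1 Hc2)). assert (0 < sin c) by (apply sin_gt_0; lra).
  cbv beta in Hc1. rewrite H in Hc1.
  assert (0 < 2 * (sinh c * sin c) * (x - 0)).
  { apply Rmult_lt_0_compat; [|lra]. apply Rmult_lt_0_compat; [lra|]. apply Rmult_lt_0_compat; lra. }
  lra.
Qed.

Lemma Dd_cont : continuity Dd.
Proof. intro x. apply derivable_continuous_pt. exists (chi' x - psi' x). apply dD. Qed.

Lemma tan_D y : 0 < y -> tan y = tanhR y -> Dd y = 0 /\ cos y <> 0.
Proof.
  intros Hy H. unfold tan, tanhR in H.
  pose proof (cosh_pos y). pose proof (sinh_pos y Hy).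
  destruct (Req_dec (cos y) 0) as [c0|c0].
  - rewrite c0 in H. unfold Rdiv in H. rewrite Rinv_0, Rmult_0_r in H.
    exfalso. assert (0 < sinh y / cosh y) by (apply Rdiv_lt_0_compat; auto). lra.
  - split; auto.
    assert (E : sin y = sinh y / cosh y * cos y) by (rewrite <- H; field; auto).
    unfold Dd, chi, psi. rewrite E. field. lra.
Qed.

Lemma D_tan y : 0 < y -> Dd y = 0 -> cos y <> 0 /\ tan y = tanhR y.
Proof.
  intros Hy H. pose proof (cosh_pos y). pose proof (sinh_pos y Hy).
  unfold Dd, chi, psi in H.
  assert (c0 : cos y <> 0).
  { intro c0. rewrite c0 in H. pose proof (sc y). rewrite c0 in H2.
    assert (sin y = 0) by nra. nra. }
  split; auto.
  assert (E : sin y = sinh y * cos y / cosh y).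
  { apply (Rmult_eq_reg_l (cosh y)); [|lra]. field_simplify; lra. }
  unfold tan, tanhR. rewrite E. field. split; lra.
Qed.

Lemma DPI : 0 < Dd PI.
Proof. unfold Dd, chi, psi. rewrite sin_PI, cos_PI. pose proof (sinh_pos PI PI_RGT_0). lra. Qed.

Lemma D3 : Dd (3 / 2 * PI) < 0.
Proof.
  replace (3 / 2 * PI) with (3 * (PI / 2)) by field.
  unfold Dd, chi, psi. rewrite sin_3PI2, cos_3PI2. pose proof (cosh_pos (3 * (PI / 2))). lra.
Qed.

Lemma ac_bounds ac : is_smallest_pos_sol_tan_tanh ac -> PI < ac < 3 / 2 * PI.
Proof.
  intros [H0 [H1 H2]]. pose proof PI_RGT_0.
  split.
  - destruct (Rlt_le_dec PI ac) as [h|h]; auto. exfalso.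
    destruct (tan_D ac H0 H1) as [E _]. pose proof (Dpos_small ac (conj H0 h)). lra.
  - assert (Hle : PI <= 3 / 2 * PI) by lra.
    assert (Hm : Dd PI * Dd (3 / 2 * PI) <= 0).
    { pose proof DPI; pose proof D3. nra. }
    destruct (IVT_cor Dd PI (3 / 2 * PI) Dd_cont Hle Hm) as [z [[Hz1 Hz2] Hz]].
    assert (z <> PI) by (intro e; rewrite e in Hz; pose proof DPI; lra).
    assert (z <> 3 / 2 * PI) by (intro e; rewrite e in Hz; pose proof D3; lra).
    destruct (D_tan z ltac:(lra) Hz) as [_ Ht].
    pose proof (H2 z ltac:(lra) Ht). lra.
Qed.

Lemma Dpos_ac ac : is_smallest_pos_sol_tan_tanh ac -> forall x, 0 < x < ac -> 0 < Dd x.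
Proof.
  intros Hac x [Hx1 Hx2]. destruct Hac as [H0 [H1 H2]].
  destruct (Rle_lt_dec x PI) as [h|h]. { apply Dpos_small; lra. }
  destruct (Rlt_le_dec 0 (Dd x)) as [d|d]; auto. exfalso.
  assert (Hm : Dd PI * Dd x <= 0) by (pose proof DPI; nra).
  destruct (IVT_cor Dd PI x Dd_cont ltac:(lra) Hm) as [z [[Hz1 Hz2] Hz]].
  pose proof PI_RGT_0.
  destruct (D_tan z ltac:(lra) Hz) as [_ Ht].
  pose proof (H2 z ltac:(lra) Ht). lra.
Qed.

Lemma neg_deriv0 (f : R -> R) l a : 0 < a -> f 0 = 0 -> derivable_pt_lim f 0 l -> l < 0 ->
  exists x, 0 < x < a /\ f x < 0.
Proof.
  intros Ha f0 Hd Hl.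
  destruct (Hd (- l / 2) ltac:(lra)) as [del Hdel].
  pose proof (cond_pos del) as Hdp.
  set (h := Rmin (del / 2) (a / 2)).
  assert (Hh1 : 0 < h) by (unfold h; apply Rmin_glb_lt; lra).
  assert (Hh2 : h <= del / 2) by apply Rmin_l.
  assert (Hh3 : h <= a / 2) by apply Rmin_r.
  exists h. split; [lra|].
  specialize (Hdel h ltac:(lra)). rewrite Rabs_right in Hdel by lra.
  specialize (Hdel ltac:(lra)).
  rewrite Rplus_0_l, f0, Rminus_0_r in Hdel.
  apply Rabs_def2 in Hdel. destruct Hdel as [A B].
  assert (f h / h < 0) by lra.
  replace (f h) with (f h / h * h) by (field; lra).
  assert (0 < - (f h / h) * h) by (apply Rmult_lt_0_compat; lra). lra.
Qed.

Theorem lemmaC6 (ac : R) (Hac : is_smallest_pos_sol_tan_tanh ac) :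
  (PI < ac < 3 / 2 * PI) /\
  (forall a : R, 0 < a ->
     ((forall x : R, 0 < x < a -> ineqC6 a x > 0) <-> (0 < a <= ac))).
Proof.
  pose proof (ac_bounds ac Hac) as Hb. split; auto.
  pose proof (Dpos_ac ac Hac) as Dp.
  pose proof PI_RGT_0.
  destruct Hac as [H0 [H1 H2]].
  destruct (tan_D ac H0 H1) as [Dac cac].
  intros a Ha. split.
  - intro Hall. split; auto.
    destruct (Rle_lt_dec a ac) as [h|h]; auto. exfalso.
    assert (cneg : cos ac < 0) by (apply cos_lt_0; lra).
    pose proof (sinh_pos ac H0).
    assert (s : psi ac < 0) by (unfold psi; nra).
    assert (Hchi : chi ac = psi ac) by (unfold Dd in Dac; lra).
    pose proof (Hall ac ltac:(lra)) as G. rewrite ineq_eq, Hchi in G.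
    assert (Da : Dd a < 0).
    { unfold Dd. assert (0 < psi ac * (chi a - psi a)) by (rewrite Rmult_minus_distr_l; lra). nra. }
    assert (Hd0 := dg a 0).
    assert (E : chi a * psi' 0 - psi a * chi' 0 = Dd a).
    { unfold psi', chi', Dd. rewrite sinh_0, sin_0, cosh_0, cos_0. ring. }
    rewrite E in Hd0.
    assert (g0 : ineqC6 a 0 = 0) by (unfold ineqC6; rewrite sinh_0, sin_0; ring).
    destruct (neg_deriv0 (ineqC6 a) (Dd a) a Ha g0 Hd0 Da) as [x [Hx G2]].
    pose proof (Hall x Hx). lra.
  - intros [_ Hle] x Hx.
    rewrite ineq_eq.
    assert (Dx : 0 < Dd x) by (apply Dp; lra).
    destruct (Req_dec a ac) as [e|e].
    + subst a. assert (Hchi : chi ac = psi ac) by (unfold Dd in Dac; lra).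
      rewrite Hchi.
      assert (cneg : cos ac < 0) by (apply cos_lt_0; lra).
      pose proof (sinh_pos ac H0).
      assert (s : psi ac < 0) by (unfold psi; nra).
      unfold Dd in Dx. nra.
    + assert (Da : 0 < Dd a) by (apply Dp; lra).
      set (R0 := fun t => ineqC6 a t / Dd t).
      set (R1 := fun t => ((chi a * psi' t - psi a * chi' t) * Dd t - (chi' t - psi' t) * ineqC6 a t) / Rsqr (Dd t)).
      destruct (MVT_cor2 R0 R1 x a ltac:(lra)) as [c [Hc1 Hc2]].
      { intros c Hc. unfold R0, R1.
        apply (derivable_pt_lim_div (ineqC6 a) Dd); [apply dg | apply dD |].
        pose proof (Dp c ltac:(lra)). lra. }
      assert (Dc : 0 < Dd c) by (apply Dp; lra).
      assert (Num : (chi a * psi' c - psi a * chi' c) * Dd c - (chi' c - psi' c) * ineqC6 a c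
                    = - (Dd a * WW c)).
      { rewrite ineq_eq. unfold Dd, WW. ring. }
      assert (R1neg : R1 c < 0).
      { unfold R1. rewrite Num. apply Rdiv_neg_pos.
        - pose proof (WW_pos c ltac:(lra)). assert (0 < Dd a * WW c) by (apply Rmult_lt_0_compat; lra). lra.
        - unfold Rsqr. apply Rmult_lt_0_compat; lra. }
      assert (Ra : R0 a = 0) by (unfold R0; rewrite ineq_eq; unfold Rdiv; ring).
      assert (0 < - R1 c * (a - x)) by (apply Rmult_lt_0_compat; lra).
      assert (Rx : 0 < R0 x) by lra.
      unfold R0 in Rx. rewrite ineq_eq in Rx.
      assert (0 < (chi a * psi x - psi a * chi x) / Dd x * Dd x) by (apply Rmult_lt_0_compat; lra).
      replace (chi a * psi x - psi a * chi x) with ((chi a * psi x - psi a * chi x) / Dd x * Dd x) by (field; lra).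
      lra.
Qed.
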